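(* For any $m\in\mathbb Z_{\ge1}$, \[\prod_{i=1}^m(x_i+x_i^{-1})\sum_{j=0}^{\lfloor m/2\rfloor}\chi^{\operatorname{Sp}(2m)}_{(1^{m-2j})}=\sum_{b=0}^m\sum_{z=0}^{\lfloor (m-b)/2\rfloor}\xi_2(z,b)\,\chi^{\operatorname{Sp}(2m)}_{(2^{m-b-2z},1^{2z})},\] where $\xi_2(z,b)$ depends only on $z \bmod 2$ and $b\bmod 4$: for $z$ even, $\xi_2=1,1,0,0$ according as $b\equiv0,1,2,3 \pmod 4$; for $z$ odd, $\xi_2=0,-1,-1,0$ according as $b\equiv0,1,2,3\pmod 4$.
   Context: $\chi_\lambda^{\operatorname{Sp}(2m)}=\chi_\lambda^{\operatorname{Sp}(2m)}(x_1^{\pm1},\dots,x_m^{\pm1})$ is the character of the irreducible representation of $\operatorname{Sp}(2m,\mathbb C)$ with highest weight the partition $\lambda$, evaluated at a torus element with eigenvalues $x_1^{\pm1},\dots,x_m^{\pm1}$; $(2^c,1^d)$ is the partition with $c$ parts $2$ followed by $d$ parts $1$; $(1^k)$ has $k$ parts equal to $1$; $\chi_\emptyset=1$. *)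

(* Defs.v *)
From mathcomp Require Import all_boot all_order all_algebra.
Set Implicit Arguments. Unset Strict Implicit. Unset Printing Implicit Defensive.
Import Order.TTheory GRing.Theory Num.Theory.
Local Open Scope ring_scope.

(* Partitions are weakly decreasing sequences of naturals; part i (0-indexed)
   is [nth 0 la i], padded with zeros. *)

(* Weyl numerator for Sp(2m): det [ x_j^(l_i) - x_j^(-l_i) ]_{i,j},
   with l_i = la_i + m - i (i 0-indexed, i.e. la_i + m - i + 1 1-indexed). *)
Definition sp_num (F : fieldType) (m : nat) (la : seq nat) (x : 'I_m -> F) : F :=
  \det (\matrix_(i < m, j < m)
          (x j ^+ (nth 0%N la i + (m - i)) - (x j)^-1 ^+ (nth 0%N la i + (m - i)))).

Definition sp_den (F : fieldType) (m : nat) (x : 'I_m -> F) : F := sp_num [::] x.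

(* Symplectic character chi_la^{Sp(2m)}(x_1^{±1},...,x_m^{±1}) via the Weyl
   character formula (valid at regular torus elements, sp_den x != 0). *)
Definition spchar (F : fieldType) (m : nat) (la : seq nat) (x : 'I_m -> F) : F :=
  sp_num la x / sp_den x.

Definition part21 (c d : nat) : seq nat := nseq c 2%N ++ nseq d 1%N.
Definition part1 (k : nat) : seq nat := nseq k 1%N.

Definition xi2 (z b : nat) : int :=
  if ~~ odd z then
    (match (b %% 4)%N with 0 => 1 | 1 => 1 | _ => 0 end)%N%:Z
  else
    - ((match (b %% 4)%N with 1 => 1 | 2 => 1 | _ => 0 end)%N%:Z).

(* Main.v *)
Require Import Defs.
From mathcomp Require Import all_boot all_order all_algebra.
From mathcomp Require Import zify ring.
Set Implicit Arguments. Unset Strict Implicit. Unset Printing Implicit Defensive.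
Import Order.TTheory GRing.Theory Num.Theory.
Local Open Scope ring_scope.

Section Work.
Variable F : fieldType.
Variable m : nat.
Variable x : 'I_m -> F.

Definition g (k : nat) : 'rV[F]_m := \row_j (x j ^+ k - (x j)^-1 ^+ k).
Definition Dl (s : seq 'rV[F]_m) : F := \det (\matrix_(i < m, j < m) (nth 0 s i) 0 j).

Lemma g0 : g 0 = 0.
Proof. by apply/rowP => j; rewrite !mxE !expr0 subrr. Qed.

Lemma nth_cat_neq (pre rest : seq 'rV[F]_m) u v k : k != size pre ->
  nth 0 (pre ++ u :: rest) k = nth 0 (pre ++ v :: rest) k.
Proof.
move=> hk; rewrite !nth_cat; case: ltnP => // h.
have h2 : (size pre < k)%N by rewrite ltn_neqAle eq_sym hk h.
by rewrite -(subnSK h2).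
Qed.

Lemma Dl_lin (pre rest : seq 'rV[F]_m) u v a b : (size pre < m)%N ->
  Dl (pre ++ (a *: u + b *: v) :: rest) = a * Dl (pre ++ u :: rest) + b * Dl (pre ++ v :: rest).
Proof.
move=> hs; apply: (determinant_multilinear (i0 := Ordinal hs)).
- by apply/rowP => j; rewrite !mxE !nth_cat ltnn subnn /= !mxE.
- apply/matrixP => i j; rewrite !mxE (@nth_cat_neq pre rest u (a *: u + b *: v)) //.
  by rewrite -[size pre]/(nat_of_ord (Ordinal hs)) (inj_eq val_inj) eq_sym neq_lift.
- apply/matrixP => i j; rewrite !mxE (@nth_cat_neq pre rest v (a *: u + b *: v)) //.
  by rewrite -[size pre]/(nat_of_ord (Ordinal hs)) (inj_eq val_inj) eq_sym neq_lift.
Qed.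

Lemma Dl_alt (s : seq 'rV[F]_m) i j : (i < j)%N -> (j < m)%N -> nth 0 s i = nth 0 s j -> Dl s = 0.
Proof.
move=> hij hj he.
have hi : (i < m)%N by lia.
apply: (determinant_alternate (i1 := Ordinal hi) (i2 := Ordinal hj)).
  by rewrite -(inj_eq val_inj) /=; lia.
by move=> k; rewrite !mxE he.
Qed.

Lemma Dl_add (pre rest : seq 'rV[F]_m) (u v : 'rV[F]_m) : (size pre < m)%N ->
  Dl (pre ++ (u + v) :: rest) = Dl (pre ++ u :: rest) + Dl (pre ++ v :: rest).
Proof. by move=> hs; rewrite -[u]scale1r -[v]scale1r Dl_lin // !scale1r !mul1r. Qed.

Lemma Dl_scale (pre rest : seq 'rV[F]_m) (u : 'rV[F]_m) a : (size pre < m)%N ->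
  Dl (pre ++ (a *: u) :: rest) = a * Dl (pre ++ u :: rest).
Proof.
move=> hs; have := Dl_lin rest u u a 0 hs.
by rewrite scale0r addr0 mul0r addr0.
Qed.

Lemma Dl_sub (pre rest : seq 'rV[F]_m) (u v : 'rV[F]_m) : (size pre < m)%N ->
  Dl (pre ++ (u - v) :: rest) = Dl (pre ++ u :: rest) - Dl (pre ++ v :: rest).
Proof. by move=> hs; rewrite -scaleN1r Dl_add // Dl_scale // mulN1r. Qed.

Lemma Dl_zero (pre rest : seq 'rV[F]_m) : (size pre < m)%N -> Dl (pre ++ 0 :: rest) = 0.
Proof. by move=> hs; rewrite -(scale0r (0 : 'rV[F]_m)) Dl_scale // mul0r. Qed.

Lemma Dl_dup (pre : seq 'rV[F]_m) (a : 'rV[F]_m) (s : seq 'rV[F]_m) k : (size pre + (size s).+1 = m)%N -> (k < size s)%N -> nth 0 s k = a ->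
  Dl (pre ++ a :: s) = 0.
Proof.
move=> hs hk he; apply: (@Dl_alt _ (size pre) (size pre + k.+1)); first lia; first lia.
by rewrite !nth_cat ltnn subnn /= ltnNge leq_addr /= addKn.
Qed.

Lemma Dl_swap (pre : seq 'rV[F]_m) (a b : 'rV[F]_m) rest : ((size pre).+1 < m)%N ->
  Dl (pre ++ a :: b :: rest) = - Dl (pre ++ b :: a :: rest).
Proof.
move=> hs.
have h1 : (size pre < m)%N by lia.
have h2 : forall c : 'rV[F]_m, (size (rcons pre c) < m)%N by move=> c; rewrite size_rcons.
have e : forall c u v, pre ++ c :: u :: v = rcons pre c ++ u :: v by move=> c u v; rewrite cat_rcons.
have z0 : Dl (pre ++ (a + b) :: (a + b) :: rest) = 0.
  by apply: (@Dl_alt _ (size pre) (size pre).+1) => //; rewrite !nth_cat ltnn ltnNge leqnSn /= subnn subSnn.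
rewrite Dl_add // !e !Dl_add // -!e in z0.
have za : Dl (pre ++ a :: a :: rest) = 0.
  by apply: (@Dl_alt _ (size pre) (size pre).+1) => //; rewrite !nth_cat ltnn ltnNge leqnSn /= subnn subSnn.
have zb : Dl (pre ++ b :: b :: rest) = 0.
  by apply: (@Dl_alt _ (size pre) (size pre).+1) => //; rewrite !nth_cat ltnn ltnNge leqnSn /= subnn subSnn.
rewrite za zb add0r addr0 in z0.
by apply/eqP; rewrite -subr_eq0 opprK z0.
Qed.

Lemma Dl_addrow (pre : seq 'rV[F]_m) (a b : 'rV[F]_m) c rest : ((size pre).+1 < m)%N ->
  Dl (pre ++ (a + c *: b) :: b :: rest) = Dl (pre ++ a :: b :: rest).
Proof.
move=> hs; have h1 : (size pre < m)%N by lia.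
rewrite -[a]scale1r Dl_lin // mul1r scale1r.
have -> : Dl (pre ++ b :: b :: rest) = 0.
  by apply: (@Dl_alt _ (size pre) (size pre).+1) => //; rewrite !nth_cat ltnn ltnNge leqnSn /= subnn subSnn.
by rewrite mulr0 addr0.
Qed.


Definition omL (n : nat) (la : seq nat) : seq 'rV[F]_m :=
  [seq g (nth 0%N la i + (n - i)) | i <- iota 0 n].
Definition om n c d := omL n (part21 c d).

Lemma size_omL n la : size (omL n la) = n.
Proof. by rewrite size_map size_iota. Qed.
Lemma size_om n c d : size (om n c d) = n.
Proof. exact: size_omL. Qed.

Lemma omLS n la : omL n.+1 la = g (nth 0%N la 0 + n.+1) :: omL n (behead la).
Proof.
rewrite /omL /=; have -> : iota 1 n = map (addn 1) (iota 0 n) by rewrite -iotaDl.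
rewrite -map_comp; congr (_ :: _).
by apply: eq_map => i /=; rewrite add1n nth_behead subSS.
Qed.

Lemma omS2 n c d : om n.+1 c.+1 d = g n.+3 :: om n c d.
Proof. by rewrite /om omLS /= add2n. Qed.
Lemma omS1 n d : om n.+1 0 d.+1 = g n.+2 :: om n 0 d.
Proof. by rewrite /om omLS /= add1n. Qed.
Lemma omS0 n : om n.+1 0 0 = g n.+1 :: om n 0 0.
Proof. by rewrite /om omLS /= add0n. Qed.
Lemma om0 c d : om 0 c d = [::].
Proof. by []. Qed.

Lemma sp_numE la : sp_num la x = Dl (omL m la).
Proof.
rewrite /sp_num /Dl; congr (\det _); apply/matrixP => i j; rewrite !mxE.
by rewrite (nth_map 0%N) ?size_iota // nth_iota // add0n mxE.
Qed.


Definition revmap (f : nat -> 'rV[F]_m) n := [seq f (n - i)%N | i <- iota 0 n].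
Lemma revmapS f n : revmap f n.+1 = f n.+1 :: revmap f n.
Proof.
rewrite /revmap /=; have -> : iota 1 n = map (addn 1) (iota 0 n) by rewrite -iotaDl.
by rewrite -map_comp; congr (_ :: _); apply: eq_map => i /=; rewrite add1n subSS.
Qed.
Lemma size_revmap f n : size (revmap f n) = n.
Proof. by rewrite size_map size_iota. Qed.

Definition wr t n := revmap (fun a => g a + t *: g a.+1) n.

Lemma Wsum t n pre : (size pre + n = m)%N ->
  \sum_(k < n.+1) t ^+ k * Dl (pre ++ om n 0 k) = Dl (pre ++ wr t n).
Proof.
elim: n pre => [|n IH] pre hs.
  by rewrite big_ord1 expr0 mul1r.
have hs1 : (size pre < m)%N by lia.
have hs2 : forall a, (size (rcons pre a) + n = m)%N by move=> a; rewrite size_rcons; lia.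
rewrite /wr revmapS -/(wr t n) Dl_add // Dl_scale //.
rewrite -!cat_rcons -!IH //.
rewrite big_ord_recl expr0 mul1r omS0 -cat_rcons.
rewrite mulr_sumr; congr (_ + _).
  rewrite big_ord_recl expr0 mul1r -[LHS]addr0; congr (_ + _); symmetry.
  case: n IH hs hs2 => [|n] IH hs hs2; first by rewrite big_ord0.
  apply: big1 => i _; rewrite /= omS1 cat_rcons.
  by rewrite (@Dl_dup _ _ _ 0%N) ?mulr0 //= size_om; lia.
by apply: eq_bigr => i _; rewrite /= omS1 cat_rcons exprS mulrA.
Qed.

Lemma parity (f : nat -> F) n :
  2%:R * \sum_(j < (n./2).+1) f (n - 2 * j)%N =
  \sum_(k < n.+1) (1 + (-1) ^+ (n - k)) * f k.
Proof.
suff H : forall n, (2%:R * \sum_(j < (n./2).+1) f (n - 2 * j)%N =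
  \sum_(k < n.+1) (1 + (-1) ^+ (n - k)) * f k) /\
  (2%:R * \sum_(j < (n.+1./2).+1) f (n.+1 - 2 * j)%N =
  \sum_(k < n.+2) (1 + (-1) ^+ (n.+1 - k)) * f k) by case: (H n).
clear n; elim=> [|n [IH IH1]].
  split.
    by rewrite !big_ord1 /= expr0 mulr_natl mulr2n.
  rewrite big_ord1 !big_ord_recr big_ord0 /= add0r expr1 expr0 subrr mul0r add0r.
  by rewrite mulr_natl mulr2n.
split; first exact: IH1.
rewrite [(n.+2)./2]/= big_ord_recl mulrDr.
rewrite (eq_bigr (fun j : 'I_(n./2).+1 => f (n - 2 * j)%N)); last first.
  by move=> j _; congr f; rewrite lift0; lia.
rewrite IH [in RHS]big_ord_recr [in RHS]big_ord_recr /= subnn subSnn expr0 expr1 subrr mul0r addr0.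
rewrite muln0 subn0 addrC; congr (_ + _).
apply: eq_bigr => k _; congr (_ * _); congr (1 + _).
have hk : (k <= n)%N by case: k => /= k; lia.
have -> : (n.+2 - k = (n - k).+2)%N by lia.
by rewrite !exprS mulN1r mulN1r opprK.
Qed.



Hypothesis xnz : forall i, x i != 0.

Definition cvec : 'rV[F]_m := \row_j (x j + (x j)^-1).
Definition Sm (r : 'rV[F]_m) := r *m diag_mx cvec.

Lemma Dl_diag s : Dl s * \prod_j (x j + (x j)^-1) = Dl (map Sm s).
Proof.
rewrite /Dl.
have -> : \matrix_(i < m, j < m) (nth 0 (map Sm s) i) 0 j
   = (\matrix_(i < m, j < m) (nth 0 s i) 0 j) *m diag_mx cvec.
  apply/matrixP => i j; rewrite mul_mx_diag !mxE.
  case: (ltnP i (size s)) => h.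
    by rewrite (nth_map 0) // /Sm mul_mx_diag !mxE.
  by rewrite !nth_default ?size_map // !mxE mul0r.
by rewrite det_mulmx det_diag; congr (_ * _); apply: eq_bigr => j _; rewrite mxE.
Qed.

Lemma Sm_g a : (0 < a)%N -> Sm (g a) = g a.+1 + g a.-1.
Proof.
case: a => // b _; apply/rowP => j; rewrite /Sm mul_mx_diag !mxE /=.
set X := x j; set Y := X^-1.
have xy : X * Y = 1 by rewrite mulfV ?xnz.
have e1 : X ^+ b.+1 * Y = X ^+ b by rewrite exprSr -mulrA xy mulr1.
have e2 : Y ^+ b.+1 * X = Y ^+ b by rewrite exprSr -mulrA (mulrC Y) xy mulr1.
rewrite mulrBl !mulrDr e1 e2 -!exprSr; ring.
Qed.

Lemma Sm_lin a b (u v : 'rV[F]_m) : Sm (a *: u + b *: v) = a *: Sm u + b *: Sm v.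
Proof. by rewrite /Sm mulmxDl !scalemxAl. Qed.

Lemma revmap_eq f1 f2 n : (forall a, (0 < a)%N -> f1 a = f2 a) -> revmap f1 n = revmap f2 n.
Proof. by move=> h; rewrite /revmap; apply/eq_in_map => i; rewrite mem_iota => hi; apply: h; lia. Qed.

Lemma map_revmap f n : map Sm (revmap f n) = revmap (fun a => Sm (f a)) n.
Proof. by rewrite /revmap -map_comp. Qed.

Definition ap a := g a.-1 + g a + g a.+1 + g a.+2.
Definition am a := g a.-1 + g a.+1 - g a - g a.+2.

Lemma map_wr1 n : map Sm (wr 1 n) = revmap ap n.
Proof.
rewrite /wr map_revmap; apply: revmap_eq => a ha /=.
rewrite -[g a]scale1r Sm_lin !scale1r !Sm_g //.
by apply/rowP => j; rewrite /ap /g !mxE; ring.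
Qed.

Lemma map_wrN1 n : map Sm (wr (-1) n) = revmap am n.
Proof.
rewrite /wr map_revmap; apply: revmap_eq => a ha /=.
rewrite -[g a]scale1r Sm_lin scale1r !Sm_g //.
by apply/rowP => j; rewrite /am /g !mxE; ring.
Qed.

Fixpoint Lq n : seq 'rV[F]_m :=
  match n with
  | 0 => [::]
  | n1.+1 => match n1 with
             | 0 => [:: g 1 + g 3]
             | n2.+1 => (g n2.+4 - g n2) :: Lq n1
             end
  end.

Lemma Clem k pre : (size pre + k.+1 = m)%N ->
  Dl (pre ++ revmap ap k.+1) + (-1) ^+ k.+1 * Dl (pre ++ revmap am k.+1)
  = 2%:R * Dl (pre ++ Lq k.+1).
Proof.
elim: k pre => [|k IH] pre hs.
  have hs1 : (size pre < m)%N by lia.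
  rewrite !revmapS /revmap /= expr1 mulN1r -Dl_sub //.
  have -> : ap 1 - am 1 = 2%:R *: (g 1 + g 3).
    by apply/rowP => j; rewrite /ap /am /g !mxE; ring.
  by rewrite Dl_scale.
have hs1 : ((size pre).+1 < m)%N by lia.
rewrite ![revmap _ k.+2]revmapS ![revmap _ k.+1]revmapS.
rewrite -[Dl (pre ++ ap _ :: _)](@Dl_addrow _ _ _ (-1)) // -[Dl (pre ++ am _ :: _)](@Dl_addrow _ _ _ 1) //.
rewrite -!revmapS.
have -> : ap k.+2 + (-1) *: ap k.+1 = g k.+4 - g k.
  by apply/rowP => j; rewrite /ap /g !mxE; ring.
have -> : am k.+2 + 1 *: am k.+1 = (-1) *: (g k.+4 - g k).
  by apply/rowP => j; rewrite /am /g !mxE; ring.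
rewrite Dl_scale; last exact: ltnW hs1.
have -> : Lq k.+2 = (g k.+4 - g k) :: Lq k.+1 by [].
have IH' := IH (rcons pre (g k.+4 - g k)); rewrite !cat_rcons size_rcons in IH'.
rewrite -IH'; last by lia.
by rewrite [(-1) ^+ k.+2]exprS !mulN1r mulrNN.
Qed.


Lemma Dl_mv2 (pre : seq 'rV[F]_m) (a b c : 'rV[F]_m) rest : ((size pre).+2 < m)%N ->
  Dl (pre ++ a :: b :: c :: rest) = Dl (pre ++ b :: c :: a :: rest).
Proof.
move=> hs; rewrite Dl_swap; last by lia.
rewrite -cat_rcons Dl_swap ?size_rcons; last by lia.
by rewrite opprK cat_rcons.
Qed.

Lemma Dl_mv3 (pre : seq 'rV[F]_m) (a b c d : 'rV[F]_m) rest : ((size pre).+3 < m)%N ->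
  Dl (pre ++ a :: b :: c :: d :: rest) = - Dl (pre ++ b :: c :: d :: a :: rest).
Proof.
move=> hs; rewrite Dl_swap; last by lia.
by rewrite -cat_rcons Dl_mv2 ?size_rcons ?cat_rcons //; lia.
Qed.

Lemma Elem M pre c z : (size pre + M.+2 = m)%N -> (c + 2 * z <= M.+1)%N ->
  Dl (pre ++ g M :: om M.+1 c (2 * z)) =
  if c == 3%N then - Dl (pre ++ om M.+2 0 (2 * z).+4)
  else if (c == 2%N) && (z == 0%N) then Dl (pre ++ om M.+2 0 2)
  else if (c == 0%N) && (z == 1%N) then Dl (pre ++ om M.+2 0 0)
  else 0.
Proof.
move=> hs hc.
case: M hs hc => [|M] hs hc.
  rewrite g0 Dl_zero; [|lia].
  case: c hc => [|[|c]] hc //=; case: z hc => [|z] //= hc; lia.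
case: c hc => [|[|[|[|c]]]] hc /=.
- case: z hc => [|[|z]] hc /=.
  + by rewrite !omS0 (@Dl_dup _ _ _ 1%N) //= size_om; lia.
  + rewrite omS1 omS1 !omS0 Dl_mv2 //; lia.
  + case: M hs hc => [|[|M]] hs hc; try lia.
    have -> : (2 * z.+2 = (2 * z).+3.+1)%N by lia.
    by rewrite !omS1 (@Dl_dup _ _ _ 2%N) //= size_om; lia.
- case: z hc => [|z] hc /=.
  + by rewrite omS2 !omS0 (@Dl_dup _ _ _ 1%N) //= size_om; lia.
  + case: M hs hc => [|M] hs hc; try lia.
    have -> : (2 * z.+1 = (2 * z).+1.+1)%N by lia.
    by rewrite omS2 !omS1 (@Dl_dup _ _ _ 2%N) //= size_om; lia.
- case: z hc => [|z] hc /=.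
  + rewrite !omS2 Dl_mv2; last by lia.
    by rewrite omS1 omS1 omS0.
  + case: M hs hc => [|[|M]] hs hc; try lia.
    have -> : (2 * z.+1 = (2 * z).+1.+1)%N by lia.
    by rewrite !omS2 !omS1 (@Dl_dup _ _ _ 2%N) //= size_om; lia.
- case: M hs hc => [|M] hs hc; first lia.
  rewrite !omS2 Dl_mv3; last by lia.
  by rewrite !omS1.
- case: M hs hc => [|[|M]] hs hc; try lia.
  by rewrite !omS2 (@Dl_dup _ _ _ 3%N) //= size_om; lia.
Qed.


Lemma xi_2 z b : xi2 z.+2 b = xi2 z b.
Proof. by rewrite /xi2 /= negbK. Qed.

Lemma xi_a k : xi2 0 k.+3 = - xi2 1 k.
Proof.
rewrite /xi2 /= -addn3 -modnDml.
have : (k %% 4 < 4)%N by rewrite ltn_mod.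
by case: (k %% 4)%N => [|[|[|[|r]]]].
Qed.

Lemma xi_b k : xi2 1 k.+1 = - xi2 0 k.
Proof.
rewrite /xi2 /= -addn1 -modnDml.
have : (k %% 4 < 4)%N by rewrite ltn_mod.
by case: (k %% 4)%N => [|[|[|[|r]]]].
Qed.

Definition xiF z b : F := (xi2 z b)%:~R.

Lemma sum_pick K t (P : bool) (G : nat -> F) :
  \sum_(b < K) (if ((b : nat) == t) && P then G b else 0) = if (t < K)%N && P then G t else 0.
Proof.
case: P; last by rewrite andbF big1 // => b _; rewrite andbF.
rewrite andbT (eq_bigr (fun b : 'I_K => if (b : nat) == t then G b else 0)); last by move=> b _; rewrite andbT.
by rewrite -big_mkcond big_ord1_eq.
Qed.

Definition Rs n pre := \sum_(b < m.+1) \sum_(z < m.+1)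
  (if (b + 2 * z <= n)%N then xiF z b * Dl (pre ++ om n (n - b - 2 * z)%N (2 * z)%N) else 0).
Definition Tz n pre := \sum_(z < m.+1)
  (if (2 * z <= n)%N then xiF z (n - 2 * z)%N * Dl (pre ++ om n 0 (2 * z)%N) else 0).

Lemma RsSplit n pre : (n < m)%N -> Rs n.+1 pre = Rs n (rcons pre (g n.+3)) + Tz n.+1 pre.
Proof.
move=> hn; rewrite /Rs /Tz.
rewrite (eq_bigr (fun b : 'I_m.+1 => \sum_(z < m.+1)
  ((if (b + 2 * z <= n)%N then xiF z b * Dl (rcons pre (g n.+3) ++ om n (n - b - 2 * z)%N (2 * z)%N) else 0)
   + (if ((b : nat) == (n.+1 - 2 * z)%N) && (2 * z <= n.+1)%N then xiF z b * Dl (pre ++ om n.+1 0 (2 * z)%N) else 0)))); last first.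
  move=> b _; apply: eq_bigr => z _.
  case: (leqP (b + 2 * z)%N n) => h1.
    have -> : (b + 2 * z <= n.+1)%N by lia.
    have -> : ((b : nat) == (n.+1 - 2 * z)%N) = false by apply/eqP; lia.
    have -> : (n.+1 - b - 2 * z = (n - b - 2 * z).+1)%N by lia.
    by rewrite omS2 cat_rcons addr0.
  case: (leqP (b + 2 * z)%N n.+1) => h2.
    have -> : ((b : nat) == (n.+1 - 2 * z)%N) = true by apply/eqP; lia.
    have -> : (2 * z <= n.+1)%N = true by lia.
    have -> : (n.+1 - b - 2 * z = 0)%N by lia.
    by rewrite add0r.
  have -> : (((b : nat) == (n.+1 - 2 * z)%N) && (2 * z <= n.+1)%N) = false.
    by apply/andP => -[/eqP h3 h4]; lia.
  by rewrite addr0.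
under eq_bigr => b _ do rewrite big_split.
rewrite big_split /=; congr (_ + _).
rewrite exchange_big; apply: eq_bigr => z _.
rewrite (@sum_pick _ (n.+1 - 2 * z)%N (2 * z <= n.+1)%N (fun b => xiF z b * Dl (pre ++ om n.+1 0 (2 * z)%N))).
by have -> : (n.+1 - 2 * z < m.+1)%N = true by lia.
Qed.


Lemma sum_shift2 K (f : nat -> F) : (2 <= K)%N ->
  \sum_(z < K) f z = f 0%N + f 1%N + \sum_(z < K - 2) f z.+2.
Proof.
case: K => [|[|K]] // _; rewrite !big_ord_recl addrA /= subn2 /=.
by congr (_ + _).
Qed.

Lemma sum_drop2 K (f : nat -> F) : (2 <= K)%N -> f K.-1 = 0 -> f K.-2 = 0 ->
  \sum_(z < K) f z = \sum_(z < K - 2) f z.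
Proof.
case: K => [|[|K]] // _ h1 h2; rewrite !big_ord_recr /= h1 h2 !addr0 subn2 /=.
by apply: eq_bigr.
Qed.

Lemma RsIns M pre : (size pre + M.+2 = m)%N ->
  Rs M.+1 (rcons pre (g M)) = - Tz M.+2 pre.
Proof.
move=> hs; rewrite /Rs.
rewrite (eq_bigr (fun b : 'I_m.+1 => \sum_(z < m.+1)
  ((if ((b : nat) == (M - 2 - 2 * z)%N) && (2 * z + 2 <= M)%N
    then - (xiF z b * Dl (pre ++ om M.+2 0 (2 * z).+4)) else 0)
  + (if ((b : nat) == (M - 1)%N) && ((z == 0%N :> nat) && (1 <= M)%N)
    then xiF z b * Dl (pre ++ om M.+2 0 2) else 0)
  + (if ((b : nat) == (M - 1)%N) && ((z == 1%N :> nat) && (1 <= M)%N)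
    then xiF z b * Dl (pre ++ om M.+2 0 0) else 0)))); last first.
  move=> b _; apply: eq_bigr => z _.
  case: (leqP (b + 2 * z)%N M.+1) => h.
    rewrite cat_rcons Elem; [|lia|lia].
    have [c hc] : exists c, c = (M.+1 - b - 2 * z)%N by eexists.
    rewrite -hc.
    case: c hc => [|[|[|[|c]]]] hc /=.
    - have [hz|hz] : (z : nat) = 1%N \/ (z : nat) <> 1%N by lia.
        have -> : ((b : nat) == (M - 2 - 2 * z)%N) && (2 * z + 2 <= M)%N = false.
          by apply/negbTE/negP => /andP[/eqP ? ?]; lia.
        have -> : ((b : nat) == (M - 1)%N) && ((z == 0%N :> nat) && (1 <= M)%N) = false.
          by apply/negbTE/negP => /and3P[/eqP ? /eqP ? ?]; lia.
        have -> : ((b : nat) == (M - 1)%N) && ((z == 1%N :> nat) && (1 <= M)%N) = true.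
          by apply/and3P; split; [apply/eqP; lia | apply/eqP; lia | lia].
        by rewrite hz eqxx add0r add0r.
      have -> : ((b : nat) == (M - 2 - 2 * z)%N) && (2 * z + 2 <= M)%N = false.
        by apply/negbTE/negP => /andP[/eqP ? ?]; lia.
      have -> : ((b : nat) == (M - 1)%N) && ((z == 0%N :> nat) && (1 <= M)%N) = false.
        by apply/negbTE/negP => /and3P[/eqP ? /eqP ? ?]; lia.
      have -> : ((b : nat) == (M - 1)%N) && ((z == 1%N :> nat) && (1 <= M)%N) = false.
        by apply/negbTE/negP => /and3P[/eqP ? /eqP ? ?]; lia.
      by move/eqP/negbTE: hz => ->; rewrite mulr0 !addr0.
    - have -> : ((b : nat) == (M - 2 - 2 * z)%N) && (2 * z + 2 <= M)%N = false.
        by apply/negbTE/negP => /andP[/eqP ? ?]; lia.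
      have -> : ((b : nat) == (M - 1)%N) && ((z == 0%N :> nat) && (1 <= M)%N) = false.
        by apply/negbTE/negP => /and3P[/eqP ? /eqP ? ?]; lia.
      have -> : ((b : nat) == (M - 1)%N) && ((z == 1%N :> nat) && (1 <= M)%N) = false.
        by apply/negbTE/negP => /and3P[/eqP ? /eqP ? ?]; lia.
      by rewrite mulr0 !addr0.
    - have [hz|hz] : (z : nat) = 0%N \/ (z : nat) <> 0%N by lia.
        have -> : ((b : nat) == (M - 2 - 2 * z)%N) && (2 * z + 2 <= M)%N = false.
          by apply/negbTE/negP => /andP[/eqP ? ?]; lia.
        have -> : ((b : nat) == (M - 1)%N) && ((z == 0%N :> nat) && (1 <= M)%N) = true.
          by apply/and3P; split; [apply/eqP; lia | apply/eqP; lia | lia].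
        have -> : ((b : nat) == (M - 1)%N) && ((z == 1%N :> nat) && (1 <= M)%N) = false.
          by apply/negbTE/negP => /and3P[/eqP ? /eqP ? ?]; lia.
        by rewrite hz eqxx add0r addr0.
      have -> : ((b : nat) == (M - 2 - 2 * z)%N) && (2 * z + 2 <= M)%N = false.
        by apply/negbTE/negP => /andP[/eqP ? ?]; lia.
      have -> : ((b : nat) == (M - 1)%N) && ((z == 0%N :> nat) && (1 <= M)%N) = false.
        by apply/negbTE/negP => /and3P[/eqP ? /eqP ? ?]; lia.
      have -> : ((b : nat) == (M - 1)%N) && ((z == 1%N :> nat) && (1 <= M)%N) = false.
        by apply/negbTE/negP => /and3P[/eqP ? /eqP ? ?]; lia.
      by move/eqP/negbTE: hz => ->; rewrite mulr0 !addr0.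
    - have -> : ((b : nat) == (M - 2 - 2 * z)%N) && (2 * z + 2 <= M)%N = true.
        by apply/andP; split; [apply/eqP; lia | lia].
      have -> : ((b : nat) == (M - 1)%N) && ((z == 0%N :> nat) && (1 <= M)%N) = false.
        by apply/negbTE/negP => /and3P[/eqP ? /eqP ? ?]; lia.
      have -> : ((b : nat) == (M - 1)%N) && ((z == 1%N :> nat) && (1 <= M)%N) = false.
        by apply/negbTE/negP => /and3P[/eqP ? /eqP ? ?]; lia.
      by rewrite mulrN !addr0.
    - have -> : ((b : nat) == (M - 2 - 2 * z)%N) && (2 * z + 2 <= M)%N = false.
        by apply/negbTE/negP => /andP[/eqP ? ?]; lia.
      have -> : ((b : nat) == (M - 1)%N) && ((z == 0%N :> nat) && (1 <= M)%N) = false.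
        by apply/negbTE/negP => /and3P[/eqP ? /eqP ? ?]; lia.
      have -> : ((b : nat) == (M - 1)%N) && ((z == 1%N :> nat) && (1 <= M)%N) = false.
        by apply/negbTE/negP => /and3P[/eqP ? /eqP ? ?]; lia.
      by rewrite mulr0 !addr0.
  have -> : ((b : nat) == (M - 2 - 2 * z)%N) && (2 * z + 2 <= M)%N = false.
    by apply/negbTE/negP => /andP[/eqP ? ?]; lia.
  have -> : ((b : nat) == (M - 1)%N) && ((z == 0%N :> nat) && (1 <= M)%N) = false.
    by apply/negbTE/negP => /and3P[/eqP ? /eqP ? ?]; lia.
  have -> : ((b : nat) == (M - 1)%N) && ((z == 1%N :> nat) && (1 <= M)%N) = false.
    by apply/negbTE/negP => /and3P[/eqP ? /eqP ? ?]; lia.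
  by rewrite !addr0.
have hM : (M.+2 <= m)%N by lia.
rewrite exchange_big /=.
rewrite (eq_bigr (fun z : 'I_m.+1 =>
   (if (2 * z + 2 <= M)%N then - (xiF z (M - 2 - 2 * z) * Dl (pre ++ om M.+2 0 (2 * z).+4)) else 0)
 + (if (z == 0%N :> nat) && (1 <= M)%N then xiF z (M - 1) * Dl (pre ++ om M.+2 0 2) else 0)
 + (if (z == 1%N :> nat) && (1 <= M)%N then xiF z (M - 1) * Dl (pre ++ om M.+2 0 0) else 0))); last first.
  move=> z _; rewrite !big_split /=.
  rewrite (@sum_pick _ (M - 2 - 2 * z)%N _ (fun b => - (xiF z b * Dl (pre ++ om M.+2 0 (2 * z).+4)))).
  rewrite (@sum_pick _ (M - 1)%N _ (fun b => xiF z b * Dl (pre ++ om M.+2 0 2))).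
  rewrite (@sum_pick _ (M - 1)%N _ (fun b => xiF z b * Dl (pre ++ om M.+2 0 0))).
  have -> : (M - 2 - 2 * z < m.+1)%N = true by lia.
  by have -> : (M - 1 < m.+1)%N = true by lia.
rewrite !big_split /=.
rewrite (@sum_pick _ 0%N _ (fun z => xiF z (M - 1) * Dl (pre ++ om M.+2 0 2))).
rewrite (@sum_pick _ 1%N _ (fun z => xiF z (M - 1) * Dl (pre ++ om M.+2 0 0))).
have -> : (1 < m.+1)%N = true by lia.
rewrite /Tz (@sum_shift2 m.+1 (fun z => if (2 * z <= M.+2)%N
      then xiF z (M.+2 - 2 * z) * Dl (pre ++ om M.+2 0 (2 * z)) else 0)); last by lia.
rewrite (@sum_drop2 m.+1 (fun i => if (2 * i + 2 <= M)%N
      then - (xiF i (M - 2 - 2 * i) * Dl (pre ++ om M.+2 0 (2 * i).+4)) else 0)); first last.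
- by rewrite /=; case: ifP => //; lia.
- by rewrite /=; case: ifP => //; lia.
- by lia.
rewrite /= !opprD.
have -> : \sum_(i < m.+1 - 2) (if (2 * i + 2 <= M)%N
      then - (xiF i (M - 2 - 2 * i) * Dl (pre ++ om M.+2 0 (2 * i).+4)) else 0)
  = - \sum_(i < m.+1 - 2) (if (2 * i.+2 <= M.+2)%N
      then xiF i.+2 (M.+2 - 2 * i.+2) * Dl (pre ++ om M.+2 0 (2 * i.+2)) else 0).
  rewrite -sumrN; apply: eq_bigr => i _.
  have -> : (2 * i.+2 <= M.+2)%N = (2 * i + 2 <= M)%N by lia.
  have -> : (M.+2 - 2 * i.+2 = M - 2 - 2 * i)%N by lia.
  have -> : (2 * i.+2 = (2 * i).+4)%N by lia.
  by rewrite /xiF xi_2; case: ifP; rewrite ?oppr0.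
rewrite -addrA [RHS]addrC; congr (_ + _).
have e0 : (2 * 0 = 0)%N by [].
have e1 : (2 * 1 = 2)%N by [].
rewrite e0 e1 subn0.
case: M hs hM => [|M] hs hM.
  have -> : xiF 0 2 = 0 by rewrite /xiF.
  have -> : xiF 1 (2 - 2) = 0 by rewrite /xiF.
  by rewrite !mul0r oppr0 !addr0.
have -> : (M.+1 - 1 = M)%N by lia.
have -> : (M.+3 - 2 = M.+1)%N by lia.
rewrite /xiF xi_a xi_b /=.
move: (xi2 1 M) (xi2 0 M) => a b.
by rewrite !mulrNz !mulNr opprK opprK addrC.
Qed.


Lemma Rs0 pre : Rs 0 pre = Dl pre.
Proof.
rewrite /Rs big_ord_recl [X in _ + X]big1 ?addr0; last first.
  by move=> b _; apply: big1 => z _; rewrite ?lift0 ?addSn.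
rewrite big_ord_recl [X in _ + X]big1 ?addr0; last first.
  by move=> z _; rewrite ?lift0 /= ?mulnS ?addnS.
by rewrite /= /xiF /= mul1r cats0.
Qed.

Lemma RsMain n pre : (size pre + n = m)%N -> Dl (pre ++ Lq n) = Rs n pre.
Proof.
suff H : forall n pre, ((size pre + n = m)%N -> Dl (pre ++ Lq n) = Rs n pre) /\
   ((size pre + n.+1 = m)%N -> Dl (pre ++ Lq n.+1) = Rs n.+1 pre) by case: (H n pre).
clear n pre; elim=> [|k IH] pre.
  split => hs; first by rewrite Rs0 cats0.
  rewrite RsSplit; last by lia.
  rewrite Rs0 /Tz big_ord_recl [X in _ + (_ + X)]big1 ?addr0; last first.
    by move=> z _; rewrite ?lift0 /= ?mulnS ?addnS.
  rewrite /= /xiF /= mul1r.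
  have -> : om 1 0 (2 * 0) = [:: g 1] by [].
  rewrite -cats1 Dl_add; [by rewrite addrC | lia].
split => hs; first by case: (IH pre) => _ ->.
have [_ IH1] := IH (rcons pre (g k.+4)).
have [_ IH2] := IH (rcons pre (g k)).
rewrite [Lq k.+2]/= Dl_sub; last by lia.
rewrite -!cat_rcons IH1 ?IH2 ?size_rcons; try lia.
rewrite [Rs k.+2 pre]RsSplit; last by lia.
by rewrite RsIns ?opprK //; lia.
Qed.


Lemma key (h2 : (2%:R : F) != 0) (hm : (1 <= m)%N) :
  (\prod_(i < m) (x i + (x i)^-1)) *
    (\sum_(j < (m./2).+1) sp_num (part1 (m - 2 * j)) x)
  = \sum_(b < m.+1) \sum_(z < ((m - b)./2).+1)
      (xi2 z b)%:~R * sp_num (part21 (m - b - 2 * z) (2 * z)) x.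
Proof.
apply: (mulfI h2).
set P := \prod_(i < m) _.
have W1 : \sum_(k < m.+1) Dl (om m 0 k) = Dl (wr 1 m).
  by rewrite -(@Wsum 1 m [::]) //; apply: eq_bigr => k _; rewrite expr1n mul1r.
have W2 : \sum_(k < m.+1) (-1) ^+ k * Dl (om m 0 k) = Dl (wr (-1) m).
  by rewrite -(@Wsum (-1) m [::]).
have E : 2%:R * \sum_(j < (m./2).+1) sp_num (part1 (m - 2 * j)) x
   = Dl (wr 1 m) + (-1) ^+ m * Dl (wr (-1) m).
  rewrite -W1 -W2 (eq_bigr (fun j : 'I_(m./2).+1 => Dl (om m 0 (m - 2 * j)%N))); last first.
    by move=> j _; rewrite sp_numE.
  rewrite (parity (fun k => Dl (om m 0 k))) mulr_sumr -big_split /=.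
  apply: eq_bigr => k _; rewrite mulrDl mul1r mulrA; congr (_ + _); congr (_ * _).
  have hk : (k <= m)%N by case: k => /= k; lia.
  have e : (-1 : F) ^+ m = (-1) ^+ (m - k) * (-1) ^+ k by rewrite -exprD subnK.
  rewrite e -mulrA -exprD addnn -mul2n exprM sqrrN expr1n.
  by rewrite expr1n mulr1.
rewrite mulrCA E mulrDr mulrCA ![P * Dl _]mulrC !Dl_diag map_wr1 map_wrN1.
have C := @Clem m.-1 [::]; rewrite prednK // in C.
have C' : Dl (revmap ap m) + (-1) ^+ m * Dl (revmap am m) = 2%:R * Dl (Lq m) by exact: C.
have R' : Dl (Lq m) = Rs m [::] by exact: (@RsMain m [::]).
rewrite C' R' /Rs; congr (_ * _).
apply: eq_bigr => b _.
rewrite (big_ord_widen m.+1 (fun z => (xi2 z b)%:~R * sp_num (part21 (m - b - 2 * z) (2 * z)) x)); last first.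
  rewrite ltnS; apply: leq_trans (leq_subr b m); rewrite -{2}(odd_double_half (m - b)) -addnn; lia.
rewrite [in RHS]big_mkcond; apply: eq_bigr => z _.
have -> : (z < ((m - b)./2).+1)%N = (b + 2 * z <= m)%N.
  have hb : (b <= m)%N by case: b => /= b; lia.
  by rewrite ltnS geq_half_double -mul2n; lia.
by case: ifP => // _; rewrite sp_numE.
Qed.

End Work.

Unset Implicit Arguments.

Theorem mainTheorem8 (F : numClosedFieldType) (m : nat) (x : 'I_m -> F) :
  (1 <= m)%N ->
  (forall i, x i != 0) ->
  sp_den x != 0 ->
  (\prod_(i < m) (x i + (x i)^-1)) *
    (\sum_(j < (m./2).+1) spchar (part1 (m - 2 * j)) x)
  = \sum_(b < m.+1) \sum_(z < ((m - b)./2).+1)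
      (xi2 z b)%:~R * spchar (part21 (m - b - 2 * z) (2 * z)) x.
Proof.
move=> hm xnz _.
have h2 : (2%:R : F) != 0 by rewrite pnatr_eq0.
rewrite /spchar -mulr_suml mulrA (key xnz h2 hm) mulr_suml.
apply: eq_bigr => b _; rewrite mulr_suml; apply: eq_bigr => z _.
by rewrite mulrA.
Qed.
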